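(* Let $\mathbb F$ be a field of characteristic $p$, $S$ a quasi-thin scheme on $X$, $x\in X$, $\mathcal T=\mathcal T(x)$, $E_a^*=E_a^*(x)$. The following are equivalent: (i) $S$ is $p'$-valenced; (ii) $\mathcal T$ is semisimple; (iii) for every $R_a\in S$ the $\mathbb F$-algebra $E_a^*\mathcal TE_a^*=\{E_a^*ME_a^*:M\in\mathcal T\}$ (with identity $E_a^*$) is semisimple.
   Context: Let $X$ be a nonempty finite set. A scheme of class $d$ on $X$ is a partition $S=\{R_0,\dots,R_d\}$ of $X\times X$ into nonempty sets such that $R_0=\{(b,b):b\in X\}$; for each $c$ there is $c'$ with $R_{c'}=\{(f,e):(e,f)\in R_c\}$; and for all $i,j,k$ the intersection number $p_{ij}^k=|\{\ell\in X:(m,\ell)\in R_i,(\ell,n)\in R_j\}|$ does not depend on $(m,n)\in R_k$. The valency is $k_a=p_{aa'}^0$; quasi-thin means all $k_a\le 2$; $p'$-valenced means no $k_a$ is divisible by $p$ (every scheme is $0'$-valenced). For $y\in X$, $yR_a=\{z:(y,z)\in R_a\}$; $A_a\in M_X(\mathbb F)$ is the $(0,1)$ adjacency matrix of $R_a$, $E_a^*(y)$ is the diagonal $(0,1)$-matrix with ones exactly at positions indexed by $yR_a$, and $\mathcal T(y)$ is the $\mathbb F$-subalgebra of $M_X(\mathbb F)$ generated by $A_0,\dots,A_d,E_0^*(y),\dots,E_d^*(y)$. *)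

(* Defs.v *)
From HB Require Import structures.
From mathcomp Require Import all_boot all_order all_algebra.
Set Implicit Arguments. Unset Strict Implicit. Unset Printing Implicit Defensive.
Import GRing.Theory.
Local Open Scope ring_scope.

(* The underlying finite set X is 'I_n; a scheme of class d on X is given by
   the map  rel : X -> X -> 'I_d.+1  sending (y,z) to the index a with
   (y,z) \in R_a. *)

Section Schemes.
Variables (n d : nat) (rel : 'I_n -> 'I_n -> 'I_d.+1).

(* p_{ij}^k evaluated at the pair (m,m') *)
Definition inter_num (i j : 'I_d.+1) (m m' : 'I_n) : nat :=
  #|[set l : 'I_n | (rel m l == i) && (rel l m' == j)]|.

Definition is_scheme : Prop :=
  [/\
      forall a : 'I_d.+1, exists y z, rel y z = a,
      forall y z, (rel y z == ord0) = (y == z),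
      forall c : 'I_d.+1, exists c' : 'I_d.+1,
        forall y z, (rel y z == c') = (rel z y == c) &
      forall i j k : 'I_d.+1, forall m m' o o',
        rel m m' = k -> rel o o' = k -> inter_num i j m m' = inter_num i j o o'].

Definition tr_ind (c : 'I_d.+1) : 'I_d.+1 :=
  odflt c [pick c' : 'I_d.+1 | [forall y, forall z, (rel y z == c') == (rel z y == c)]].

(* valency k_a = p_{a a'}^0, evaluated at the pair (y,y) in R_0 *)
Definition valency (a : 'I_d.+1) (y : 'I_n) : nat := inter_num a (tr_ind a) y y.

Definition quasi_thin : Prop := forall a y, (valency a y <= 2)%N.

Definition p'_valenced (p : nat) : Prop := forall a y, ~~ (p %| valency a y)%N.

End Schemes.

(* characteristic p of a field (p = 0 means characteristic zero) *)
Definition has_char (F : fieldType) (p : nat) : Prop :=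
  if p is 0 then forall q, q \in [pchar F] = false else p \in [pchar F].

Section Terwilliger.
Variables (F : fieldType) (n d : nat) (rel : 'I_n -> 'I_n -> 'I_d.+1).

Definition adj (a : 'I_d.+1) : 'M[F]_n := \matrix_(y, z) (rel y z == a)%:R.

Definition dual_idem (x : 'I_n) (a : 'I_d.+1) : 'M[F]_n :=
  \matrix_(y, z) ((y == z) && (rel x y == a))%:R.

(* the subspace of M_X(F) spanned by the generators of T(x), encoded via mxvec *)
Definition T_gens (x : 'I_n) : 'A[F]_n :=
  ((\sum_a <<mxvec (adj a)>>) + (\sum_a <<mxvec (dual_idem x a)>>))%MS.

Definition generated_subalg (G A : 'A[F]_n) : Prop :=
  [/\ (mxvec 1%:M <= A)%MS, (G <= A)%MS, (A * A <= A)%MS &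
      forall B : 'A[F]_n, (mxvec 1%:M <= B)%MS -> (G <= B)%MS ->
        (B * B <= B)%MS -> (A <= B)%MS].

Definition corner (E : 'M[F]_n) (A : 'A[F]_n) : 'A[F]_n :=
  (A *m lin_mx (fun M : 'M[F]_n => E *m M *m E))%MS.

Definition nilpotent_space (I : 'A[F]_n) : Prop :=
  exists k, (iter k (fun J : 'A[F]_n => (J * I)%MS) I = 0).

(* A finite-dimensional F-algebra (with identity) is semisimple iff its
   (Jacobson) radical, the largest nilpotent two-sided ideal, is zero,
   i.e. it has no nonzero nilpotent two-sided ideal. *)
Definition semisimple_alg (A : 'A[F]_n) : Prop :=
  forall I : 'A[F]_n, (I <= A)%MS -> mx_ideal A I -> nilpotent_space I ->
    I = 0.

End Terwilliger.

(* Main.v *)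
Require Import Defs.
From HB Require Import structures.
From mathcomp Require Import all_boot all_order all_algebra.
From mathcomp Require Import zify.
From Stdlib Require Import Classical.
Set Implicit Arguments. Unset Strict Implicit. Unset Printing Implicit Defensive.
Import GRing.Theory.

Section Comb.
Variables (n d : nat) (rel : 'I_n -> 'I_n -> 'I_d.+1) (x : 'I_n).
Hypothesis Hs : is_scheme rel.
Hypothesis Hq : quasi_thin rel.

Definition Y a := [set y | rel x y == a].
Definition sg y := odflt y [pick z | (rel x z == rel x y) && (z != y)].

Lemma L_reg i j m m' o o' : rel m m' = rel o o' ->
  inter_num rel i j m m' = inter_num rel i j o o'.
Proof. by case: Hs => _ _ _ H E; exact: (H i j (rel o o') m m' o o' E erefl). Qed.

Lemma L_diag y z : (rel y z == ord0) = (y == z).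
Proof. by case: Hs. Qed.

Lemma L_trind a y z : (rel y z == tr_ind rel a) = (rel z y == a).
Proof.
rewrite /tr_ind; case: pickP => [c' /forallP H | H].
  by move: (H y) => /forallP /(_ z) /eqP.
case: Hs => _ _ Ht _; case: (Ht a) => c' Hc'.
by move: (H c'); rewrite /=; move/negbT/negP; case; apply/forallP => u; apply/forallP => v; rewrite Hc'.
Qed.

Lemma L_val a y : valency rel a y = #|Y a|.
Proof.
rewrite /valency (L_reg _ _ (o := x) (o' := x)); last first.
  have h1 := L_diag y y; have h2 := L_diag x x; rewrite eqxx in h1; rewrite eqxx in h2.
  by rewrite (eqP h1) (eqP h2).
rewrite /inter_num; apply: eq_card => l; rewrite !inE L_trind.
by case: (rel x l == a).
Qed.

Lemma L_Ypos a : (0 < #|Y a|)%N.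
Proof.
case: Hs => Hne _ _ _; case: (Hne a) => u [v E].
rewrite -(L_val a u) /valency /inter_num; apply/card_gt0P; exists v.
by rewrite inE L_trind E eqxx.
Qed.

Lemma L_Yle2 a : (#|Y a| <= 2)%N.
Proof. by rewrite -(L_val a x); apply: Hq. Qed.

Lemma L_sg_rel y : rel x (sg y) = rel x y.
Proof. by rewrite /sg; case: pickP => [z /andP[/eqP -> _]|]. Qed.

Lemma L_two y z : rel x z = rel x y -> z = y \/ z = sg y.
Proof.
move=> E; have [->|nzy] := eqVneq z y; first by left.
right; rewrite /sg; case: pickP => [w /andP[/eqP Ew nwy] | H]; last first.
  by move: (H z); rewrite E eqxx nzy.
have [//|nzw] := eqVneq z w.
have : (#|[set y; z; w]| <= #|Y (rel x y)|)%N.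
  apply: subset_leq_card; apply/subsetP => u; rewrite !inE.
  by case/orP => [/orP [] | ] /eqP ->; rewrite ?E ?Ew.
move: (L_Yle2 (rel x y)).
rewrite setUC !cardsU1 cards1 !inE.
rewrite eq_sym in nzy; rewrite eq_sym in nzw.
rewrite (negbTE nwy) (negbTE nzw) nzy /= => h1 h2; exfalso; lia.
Qed.

Lemma L_sgK y : sg (sg y) = y.
Proof.
have [E|ne] := eqVneq (sg y) y; first by rewrite !E.
have h : rel x y = rel x (sg y) by rewrite L_sg_rel.
case: (@L_two (sg y) y h) => [E|E]; last by rewrite -E.
by rewrite -E eqxx in ne.
Qed.

Lemma L_sg_inj : injective sg.
Proof. exact: (can_inj L_sgK). Qed.

Lemma L_sg_fix y z : sg y = y -> rel x z = rel x y -> z = y.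
Proof. by move=> E /L_two [|]; rewrite ?E. Qed.

Lemma L_inY u a y : rel x y = a -> (u \in Y a) = ((u == y) || (u == sg y)).
Proof.
move=> Ey; rewrite inE; apply/idP/idP.
  by move/eqP; rewrite -Ey => /L_two [] ->; rewrite eqxx ?orbT.
by case/orP => /eqP ->; rewrite ?L_sg_rel Ey.
Qed.

Lemma card_sub2 (S : {set 'I_n}) p q : p != q -> S \subset [set p; q] ->
  #|S| = ((p \in S) + (q \in S))%N.
Proof.
move=> npq /subsetP sS.
have hS u : u \in S -> u = p \/ u = q.
  by move=> /sS; rewrite !inE => /orP [] /eqP; auto.
case pS: (p \in S); case qS: (q \in S).
- have -> : S = [set p; q].
    apply/setP=> u; rewrite !inE; apply/idP/idP => [/hS [] -> | /orP [] /eqP ->] //;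
    by rewrite eqxx ?orbT.
  by rewrite cards2 npq.
- have -> : S = [set p].
    apply/setP=> u; rewrite !inE; apply/idP/idP => [/[dup] uS /hS [] E | /eqP ->] //;
    rewrite ?E ?eqxx //; by rewrite -E uS in qS.
  by rewrite cards1.
- have -> : S = [set q].
    apply/setP=> u; rewrite !inE; apply/idP/idP => [/[dup] uS /hS [] E | /eqP ->] //;
    rewrite ?E ?eqxx //; by rewrite -E uS in pS.
  by rewrite cards1.
- have -> : S = set0.
    apply/setP=> u; rewrite !inE; apply/idP => /[dup] uS /hS [] E;
    by rewrite -E uS in pS qS.
  by rewrite cards0.
Qed.

Lemma card_sub1 (S : {set 'I_n}) p : S \subset [set p] -> #|S| = (p \in S).
Proof.
move=> /subsetP sS.
have hS u : u \in S -> u = p by move=> /sS; rewrite inE => /eqP.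
case pS: (p \in S).
  have -> : S = [set p].
    by apply/setP => u; rewrite inE; apply/idP/eqP => [/hS|->].
  by rewrite cards1.
have -> : S = set0.
  by apply/setP => u; rewrite inE; apply/idP => /[dup] uS /hS E; rewrite -E uS in pS.
by rewrite cards0.
Qed.

Lemma L_row y1 y2 b c : rel x y1 = rel x y2 ->
  #|[set v | (rel x v == b) && (rel y1 v == c)]| =
  #|[set v | (rel x v == b) && (rel y2 v == c)]|.
Proof.
move=> E; case: Hs => _ _ Ht _; case: (Ht c) => c' Hc'.
have h y : #|[set v | (rel x v == b) && (rel y v == c)]| = inter_num rel b c' x y.
  by apply: eq_card => v; rewrite !inE Hc'.
by rewrite !h; apply: L_reg.
Qed.

Lemma L_col z1 z2 a c : rel x z1 = rel x z2 ->
  #|[set u | (rel x u == a) && (rel u z1 == c)]| =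
  #|[set u | (rel x u == a) && (rel u z2 == c)]|.
Proof. by move=> E; apply: L_reg. Qed.

Lemma sub_two b z : rel x z = b -> forall P : pred 'I_n,
  [set v | (rel x v == b) && P v] \subset [set z; sg z].
Proof.
move=> Ez P; apply/subsetP => v; rewrite !inE => /andP[/eqP Ev _].
by case: (@L_two z v); rewrite ?Ev ?Ez // => ->; rewrite eqxx ?orbT.
Qed.

Lemma sub_one b z : rel x z = b -> sg z = z -> forall P : pred 'I_n,
  [set v | (rel x v == b) && P v] \subset [set z].
Proof.
move=> Ez Fz P; apply/subsetP => v; rewrite !inE => /andP[/eqP Ev _].
by rewrite (@L_sg_fix z v) // Ev Ez.
Qed.

Lemma L_sgrel y z : rel (sg y) (sg z) = rel y z.
Proof.
set c := rel y z; set a := rel x y; set b := rel x z.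
have Ry u : (sg z != z) -> #|[set v | (rel x v == b) && (rel u v == c)]| =
    ((rel u z == c) + (rel u (sg z) == c))%N.
  move=> nz; rewrite (card_sub2 (p := z) (q := sg z)); [|by rewrite eq_sym|exact: sub_two].
  by rewrite !inE L_sg_rel eqxx.
have Ry1 u : (sg z = z) -> #|[set v | (rel x v == b) && (rel u v == c)]| = (rel u z == c).
  move=> ez; rewrite (card_sub1 (p := z)); last exact: sub_one.
  by rewrite !inE eqxx.
have Cz v : (sg y != y) -> #|[set u | (rel x u == a) && (rel u v == c)]| =
    ((rel y v == c) + (rel (sg y) v == c))%N.
  move=> ny; rewrite (card_sub2 (p := y) (q := sg y)); [|by rewrite eq_sym|exact: sub_two].
  by rewrite !inE L_sg_rel eqxx.
have Cz1 v : (sg y = y) -> #|[set u | (rel x u == a) && (rel u v == c)]| = (rel y v == c).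
  move=> ey; rewrite (card_sub1 (p := y)); last exact: sub_one.
  by rewrite !inE eqxx.
have hr := @L_row y (sg y) b c; rewrite L_sg_rel in hr; have {}hr := hr erefl.
have hc := @L_col z (sg z) a c; rewrite L_sg_rel in hc; have {}hc := hc erefl.
have eyz : (rel y z == c) by [].
apply/eqP.
have [ey|ny] := eqVneq (sg y) y; have [ez|nz] := eqVneq (sg z) z.
- by rewrite ey ez.
- rewrite !Cz1 // in hc; rewrite ey; move: hc; rewrite eyz.
  by case: (rel y (sg z) == c).
- rewrite !Ry1 // in hr; rewrite ez; move: hr; rewrite eyz.
  by case: (rel (sg y) z == c).
- rewrite !Ry // in hr; rewrite !Cz // in hc; move: hr hc; rewrite eyz.
  by case: (rel (sg y) (sg z) == c); case: (rel y (sg z) == c); case: (rel (sg y) z == c) => /= h1 h2; lia.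
Qed.

End Comb.

Local Open Scope ring_scope.

Section Mat.
Variables (F : fieldType) (n d : nat) (rel : 'I_n -> 'I_n -> 'I_d.+1) (x : 'I_n).
Hypothesis Hs : is_scheme rel.
Hypothesis Hq : quasi_thin rel.
Variable T : 'A[F]_n.
Hypothesis HT : generated_subalg (T_gens F rel x) T.

Local Notation sg := (sg rel x).
Local Notation Y := (Y rel x).
Local Notation E := (dual_idem F rel x).

Lemma sgK y : sg (sg y) = y. Proof. exact: (L_sgK x Hs Hq). Qed.
Lemma sg_inj : injective sg. Proof. exact: (L_sg_inj Hs Hq). Qed.
Lemma sgrel y z : rel (sg y) (sg z) = rel y z. Proof. exact: (L_sgrel x Hs Hq). Qed.
Lemma sg_rel y : rel x (sg y) = rel x y. Proof. exact: L_sg_rel. Qed.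
Lemma two y z : rel x z = rel x y -> z = y \/ z = sg y. Proof. exact: (L_two Hs Hq). Qed.
Lemma sg_fix y z : sg y = y -> rel x z = rel x y -> z = y. Proof. exact: (L_sg_fix Hs Hq). Qed.

Definition Sg : 'M[F]_n := \matrix_(u, v) (sg u == v)%:R.
Definition Jm : 'M[F]_n := const_mx 1.

Lemma sum_deltal (f : 'I_n -> F) w0 : \sum_w (w0 == w)%:R * f w = f w0.
Proof.
rewrite (bigD1 w0) //= eqxx mul1r big1 ?addr0 // => w /negbTE.
by rewrite eq_sym => ->; rewrite mul0r.
Qed.

Lemma sum_deltar (f : 'I_n -> F) w0 : \sum_w f w * (w == w0)%:R = f w0.
Proof.
rewrite (bigD1 w0) //= eqxx mulr1 big1 ?addr0 // => w /negbTE ->.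
by rewrite mulr0.
Qed.

Lemma Sg_mulE (N : 'M[F]_n) u v : (Sg *m N) u v = N (sg u) v.
Proof. by rewrite !mxE -[RHS](sum_deltal (fun w => N w v) (sg u)); apply: eq_bigr => w _; rewrite mxE. Qed.

Lemma mulSgE (N : 'M[F]_n) u v : (N *m Sg) u v = N u (sg v).
Proof.
rewrite !mxE -[RHS](sum_deltar (fun w => N u w) (sg v)); apply: eq_bigr => w _.
rewrite mxE; congr (_ * _%:R).
by rewrite -{1}(sgK v) (inj_eq sg_inj).
Qed.

Lemma E_mulE a (N : 'M[F]_n) u v : (E a *m N) u v = (rel x u == a)%:R * N u v.
Proof.
rewrite !mxE -(sum_deltal (fun w => (rel x u == a)%:R * N w v) u).
by apply: eq_bigr => w _; rewrite mxE; case: (u == w); case: (rel x u == a); rewrite /= ?mul1r ?mul0r.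
Qed.

Lemma mulE_E a (N : 'M[F]_n) u v : (N *m E a) u v = N u v * (rel x v == a)%:R.
Proof.
rewrite !mxE -(sum_deltar (fun w => N u w * (rel x v == a)%:R) v).
by apply: eq_bigr => w _; rewrite mxE; case: (eqVneq w v) => [->|nwv]; rewrite ?eqxx ?(negbTE nwv) /= ?mulr1 ?mulr0.
Qed.

Lemma comm_sg (N : 'M[F]_n) : Sg *m N = N *m Sg <-> forall u v, N (sg u) v = N u (sg v).
Proof.
split => [E0 u v | H]; first by rewrite -Sg_mulE E0 mulSgE.
by apply/matrixP => u v; rewrite Sg_mulE mulSgE H.
Qed.

Lemma sg_inv (N : 'M[F]_n) : (forall u v, N (sg u) v = N u (sg v)) -> forall u v, N (sg u) (sg v) = N u v.
Proof. by move=> H u v; rewrite H sgK. Qed.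

Lemma T1 : (1%:M \in T)%MS.
Proof. by case: HT. Qed.

Lemma TM (A B : 'M[F]_n) : (A \in T)%MS -> (B \in T)%MS -> (A *m B \in T)%MS.
Proof. by case: HT => _ _ H _ hA hB; apply: submx_trans H; apply: mem_mulsmx. Qed.

Lemma Tadj c : (adj F rel c \in T)%MS.
Proof.
case: HT => _ H _ _; apply: submx_trans H; rewrite /T_gens.
apply: submx_trans (addsmxSl _ _); rewrite (sumsmx_sup c) // genmxE //.
Qed.

Lemma TE a : (E a \in T)%MS.
Proof.
case: HT => _ H _ _; apply: submx_trans H; rewrite /T_gens.
apply: submx_trans (addsmxSr _ _); rewrite (sumsmx_sup a) // genmxE //.
Qed.

Lemma Jm_sum : Jm = \sum_c adj F rel c.
Proof.
apply/matrixP => u v; rewrite summxE mxE.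
rewrite (bigD1 (rel u v)) //= mxE eqxx big1 ?addr0 // => c nc.
by rewrite mxE eq_sym (negbTE nc).
Qed.

Lemma TJ : (Jm \in T)%MS.
Proof. by rewrite Jm_sum linear_sum summx_sub // => c _; apply: Tadj. Qed.

Lemma gens_sg : (T_gens F rel x <= cent_mx (mxvec Sg))%MS.
Proof.
have key (N : 'M[F]_n) : (forall u v, N (sg u) v = N u (sg v)) -> (mxvec N <= cent_mx (mxvec Sg))%MS.
  move=> H; apply/cent_rowP => i A; rewrite /A row_id mxvecK.
  exact/comm_sg.
rewrite /T_gens addsmx_sub; apply/andP; split; apply/sumsmx_subP => a _; rewrite genmxE.
  apply: key => u v; rewrite !mxE; congr ((_ == _)%:R).
  by rewrite -(sgrel (sg u) v) sgK.
apply: key => u v; rewrite !mxE (sg_rel u).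
congr ((_ && _)%:R); by rewrite -{1}(sgK v) (inj_eq sg_inj).
Qed.

Lemma Tsg (A : 'M[F]_n) : (A \in T)%MS -> forall u v, A (sg u) (sg v) = A u v.
Proof.
move=> hA; apply: sg_inv; apply/comm_sg.
case: HT => _ _ _ Hmin.
have : (T <= cent_mx (mxvec Sg))%MS.
  by apply: Hmin; [exact: scalar_mx_cent | exact: gens_sg | exact: cent_mx_ideal].
move=> /(submx_trans hA) /cent_mxP; apply; exact: submx_refl.
Qed.


Definition trL := lin_mx (@trmx F n n).

Lemma trLK (Q : 'M[F]_(n * n)%N) : Q *m trL *m trL = Q.
Proof.
apply/row_matrixP => i; rewrite !row_mul !mul_rV_lin /= mxvecK trmxK vec_mxK //.
Qed.

Lemma mem_trL (A : 'M[F]_n) (S : 'A[F]_n) : (A \in S *m trL)%MS = (A^T \in S)%MS.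
Proof.
apply/idP/idP => H.
  have := submxMr trL H; rewrite mul_vec_lin /= -mulmxA.
  by rewrite (_ : trL *m trL = 1%:M) ?mulmx1 // -[trL *m trL]mul1mx mulmxA trLK.
by rewrite -[A]trmxK -mul_vec_lin; apply: submxMr.
Qed.

Lemma Ttr (A : 'M[F]_n) : (A \in T)%MS -> (A^T \in T)%MS.
Proof.
move=> hA; case: HT => h1 hg hTT Hmin.
have : (T <= T *m trL)%MS.
  apply: Hmin.
  - by rewrite mem_trL trmx1.
  - rewrite /T_gens addsmx_sub; apply/andP; split; apply/sumsmx_subP => a _; rewrite genmxE mem_trL.
      case: Hs => _ _ Ht _; case: (Ht a) => c' Hc'.
      have -> : (adj F rel a)^T = adj F rel c' by apply/matrixP => u v; rewrite !mxE Hc'.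
      exact: Tadj.
    have -> : (E a)^T = E a.
      by apply/matrixP => u v; rewrite !mxE; case: (eqVneq u v) => [->|nuv]; rewrite ?eqxx // (negbTE nuv) eq_sym (negbTE nuv).
    exact: TE.
  - apply/mulsmx_subP => A1 A2; rewrite !mem_trL trmx_mul => H1 H2.
    exact: TM.
by move/(submx_trans hA); rewrite mem_trL.
Qed.


Definition cf (G : 'M[F]_n) (M : 'M[F]_n) := G *m M *m G.
Lemma cf_is_linear G : linear (cf G).
Proof. by move=> k A B; rewrite /cf mulmxDr mulmxDl -scalemxAr -scalemxAl. Qed.
HB.instance Definition _ G := GRing.isLinear.Build F 'M[F]_n 'M[F]_n _ (cf G) (cf_is_linear G).

Lemma mem_corner G (A : 'M[F]_n) :
  (A \in corner G T)%MS <-> exists2 N, (N \in T)%MS & A = G *m N *m G.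
Proof.
rewrite /corner; change (lin_mx _) with (lin_mx (cf G)); split.
  case/submxP => D hD; rewrite mulmxA mul_rV_lin in hD.
  exists (vec_mx (D *m T)); first by rewrite vec_mxK submxMl.
  by move/(congr1 vec_mx): hD; rewrite !mxvecK.
by case=> N hN ->; rewrite -[mxvec _](mul_vec_lin (cf G)); apply: submxMr.
Qed.

Lemma nil_eig (I : 'A[F]_n) : nilpotent_space I -> forall Z, (Z \in I)%MS ->
  forall (v : 'cV[F]_n) (l : F), v != 0 -> Z *m v = l *: v -> l = 0.
Proof.
case=> k Hk Z hZ v l nv hv.
pose Zp m := iter m (fun A => A *m Z) Z.
have h1 m : (Zp m \in iter m (fun J => (J * I)%MS) I)%MS.
  by elim: m => [|m IH] //=; apply: mem_mulsmx.
have h2 m : Zp m *m v = l ^+ m.+1 *: v.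
  elim: m => [|m IH]; first by rewrite expr1.
  by rewrite /= -mulmxA hv -scalemxAr IH scalerA -exprS.
have := h1 k; rewrite Hk => /memmx0 hz.
have := h2 k; rewrite hz mul0mx => /esym /eqP; rewrite scalemx_eq0 (negbTE nv) orbF.
by rewrite expf_eq0 /= => /eqP.
Qed.


Definition ind a : 'cV[F]_n := \col_u (rel x u == a)%:R.
Definition Jab a b : 'M[F]_n := \matrix_(u, v) ((rel x u == a) && (rel x v == b))%:R.
Definition dvec w : 'cV[F]_n := \col_u ((u == w)%:R - (u == sg w)%:R).

Lemma sum_ind a : \sum_w ((rel x w == a)%:R : F) = (#|Y a|)%:R.
Proof.
rewrite -[#|Y a|]sum1_card natr_sum [RHS]big_mkcond /=; apply: eq_bigr => w _.
by rewrite inE; case: (_ == _).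
Qed.

Lemma sum2 (f : 'I_n -> F) p q : p != q -> (forall v, v != p -> v != q -> f v = 0) ->
  \sum_v f v = f p + f q.
Proof.
move=> npq H; rewrite (bigD1 p) //= (bigD1 q) 1?eq_sym //= big1 ?addr0 // => v /andP[nq np].
exact: H.
Qed.

Lemma sum1 (f : 'I_n -> F) p : (forall v, v != p -> f v = 0) -> \sum_v f v = f p.
Proof. by move=> H; rewrite (bigD1 p) //= big1 ?addr0 // => v /H. Qed.

Lemma card_Y2 y : sg y != y -> #|Y (rel x y)| = 2%N.
Proof.
move=> ny; apply/eqP; rewrite eqn_leq (L_Yle2 x Hs Hq) /=.
have <- : #|[set y; sg y]| = 2%N by rewrite cards2 eq_sym ny.
by apply: subset_leq_card; apply/subsetP => u; rewrite !inE => /orP [] /eqP ->; rewrite ?sg_rel.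
Qed.

Lemma ind_neq0 a y : rel x y = a -> ind a != 0.
Proof.
move=> Ey; apply/negP => /eqP /matrixP /(_ y 0); rewrite !mxE Ey eqxx => /eqP.
by rewrite oner_eq0.
Qed.

Lemma dvec_neq0 y : sg y != y -> dvec y != 0.
Proof.
move=> ny; apply/negP => /eqP /matrixP /(_ y 0); rewrite !mxE eqxx eq_sym (negbTE ny) subr0 => /eqP.
by rewrite oner_eq0.
Qed.

Lemma dvlem (N : 'M[F]_n) a b y z (al : F) :
  (forall u v, N (sg u) (sg v) = N u v) ->
  (forall u v, ~~ ((rel x u == a) && (rel x v == b)) -> N u v = 0) ->
  rel x y = a -> sg y != y -> sg z != z ->
  N y z = al -> N y (sg z) = - al -> N *m dvec z = (al *+ 2) *: dvec y.
Proof.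
move=> Hsg Hsup Ey ny nz Ea Eb; apply/matrixP => u i; rewrite !mxE.
under eq_bigr => v _ do rewrite mxE mulrBr.
rewrite sumrB sum_deltar sum_deltar.
have [->|nuy] := eqVneq u y.
  by rewrite Ea Eb eq_sym (negbTE ny) subr0 mulr1 opprK mulr2n.
have [->|nus] := eqVneq u (sg y).
  have e1 : N (sg y) z = N y (sg z) by rewrite -[in RHS](Hsg y (sg z)) sgK.
  rewrite e1 Hsg Eb Ea /= sub0r mulrN1 mulr2n opprD.  done.
have nua : rel x u != a.
  apply/negP => /eqP Eu; case: (@two y u); rewrite ?Eu ?Ey //.
    by move/eqP; rewrite (negbTE nuy).
  by move/eqP; rewrite (negbTE nus).
by rewrite !Hsup ?(negbTE nua) // /= !subr0 mulr0.
Qed.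


Lemma core (X : 'M[F]_n) a b :
  (forall c, (#|Y c|)%:R != 0 :> F) ->
  (forall u v, X (sg u) (sg v) = X u v) ->
  (forall u v, ~~ ((rel x u == a) && (rel x v == b)) -> X u v = 0) ->
  (forall (v : 'cV[F]_n) l, v != 0 -> X *m Jab b a *m v = l *: v -> l = 0) ->
  (forall (v : 'cV[F]_n) l, v != 0 -> X *m X^T *m v = l *: v -> l = 0) ->
  X = 0.
Proof.
move=> Hinv Hsg Hsup H1 H2; apply/matrixP => y z; rewrite mxE.
have [/andP[/eqP Ey /eqP Ez] | nyz] := boolP ((rel x y == a) && (rel x z == b)); last exact: Hsup.
pose r u := \sum_v X u v.
have rsg u : r (sg u) = r u.
  rewrite /r (reindex_inj sg_inj) /=; apply: eq_bigr => v _; exact: Hsg.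
have Xind : X *m ind b = \col_u r u.
  apply/matrixP => u i; rewrite !mxE; apply: eq_bigr => v _; rewrite mxE.
  have [Ev|nv] := eqVneq (rel x v) b; first by rewrite mulr1.
  by rewrite mulr0 Hsup // (negbTE nv) andbF.
have Jind : Jab b a *m ind a = (#|Y a|)%:R *: ind b.
  apply/matrixP => v i; rewrite !mxE -sum_ind mulr_suml; apply: eq_bigr => w _; rewrite !mxE.
  by case: (rel x v == b); case: (rel x w == a); rewrite /= ?mulr1 ?mulr0 ?mul0r.
have colr : \col_u r u = r y *: ind a.
  apply/matrixP => u i; rewrite !mxE.
  have [Eu|nu] := eqVneq (rel x u) a.
    rewrite mulr1; case: (@two y u); rewrite ?Eu ?Ey // => ->; by rewrite ?rsg.
  rewrite mulr0 /r big1 // => v _; apply: Hsup; by rewrite (negbTE nu).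
have ry : r y = 0.
  have := H1 (ind a) ((#|Y a|)%:R * r y) (ind_neq0 Ey).
  rewrite -mulmxA Jind -scalemxAr Xind colr scalerA => /(_ erefl) /eqP.
  by rewrite mulf_eq0 (negbTE (Hinv a)) /= => /eqP.
have Hrow v : rel x v != b -> X y v = 0 by move=> nv; apply: Hsup; rewrite (negbTE nv) andbF.
have [ez|nz] := eqVneq (sg z) z.
  rewrite -ry /r (sum1 (p := z)) // => v nvz; apply: Hrow; apply/negP => /eqP Ev.
  have E1 : v = z by apply: (sg_fix ez); rewrite Ev Ez.
  by rewrite E1 eqxx in nvz.
have ry2 : r y = X y z + X y (sg z).
  rewrite /r (sum2 (p := z) (q := sg z)) 1?eq_sym // => v n1 n2; apply: Hrow; apply/negP => /eqP Ev.
  by case: (@two z v); rewrite ?Ev ?Ez // => E; [move: n1 | move: n2]; rewrite E eqxx.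
have Eb : X y (sg z) = - X y z by apply/eqP; rewrite -addr_eq0 addrC -ry2 ry.
have two0 : (2%:R : F) != 0 by have := Hinv b; rewrite -Ez card_Y2.
have [ey|ny] := eqVneq (sg y) y.
  have e : X y (sg z) = X y z by rewrite -{1}ey Hsg.
  have h0 : 2%:R * X y z = 0 by rewrite mulr_natl mulr2n -{2}e -ry2 ry.
  by move/eqP: h0; rewrite mulf_eq0 (negbTE two0) => /eqP.
have D1 := dvlem Hsg Hsup Ey ny nz erefl Eb.
have D2 : X^T *m dvec y = (X y z *+ 2) *: dvec z.
  apply: (dvlem (a := b) (b := a)) => //.
  - by move=> u v; rewrite !mxE; exact: Hsg.
  - by move=> u v h; rewrite mxE; apply: Hsup; rewrite andbC.
  - by rewrite mxE.
  - by rewrite mxE -[in LHS](sgK z) Hsg.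
have := H2 (dvec y) ((X y z *+ 2) ^+ 2) (dvec_neq0 ny).
rewrite -mulmxA D2 -scalemxAr D1 scalerA -expr2 => /(_ erefl) /eqP.
by rewrite expf_eq0 /= -mulr_natl mulf_eq0 (negbTE two0) /= => /eqP.
Qed.


Lemma Etr a : (E a)^T = E a.
Proof.
by apply/matrixP => u v; rewrite !mxE; case: (eqVneq u v) => [->|nuv]; rewrite ?eqxx // (negbTE nuv) eq_sym (negbTE nuv).
Qed.

Lemma JabE a b : Jab a b = E a *m Jm *m E b.
Proof.
by apply/matrixP => u v; rewrite mulE_E E_mulE !mxE; case: (rel x u == a); case: (rel x v == b); rewrite /= ?mul1r ?mulr1 ?mul0r ?mulr0.
Qed.

Lemma TJab a b : (Jab a b \in T)%MS.
Proof. by rewrite JabE; apply: TM; [apply: TM; [apply: TE | apply: TJ] | apply: TE]. Qed.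

Lemma EME_sup a b (M : 'M[F]_n) u v : ~~ ((rel x u == a) && (rel x v == b)) -> (E a *m M *m E b) u v = 0.
Proof.
by rewrite mulE_E E_mulE; case: (rel x u == a); case: (rel x v == b); rewrite /= ?mul0r ?mulr0.
Qed.

Lemma EME_diag a b (M : 'M[F]_n) u v : rel x u = a -> rel x v = b -> (E a *m M *m E b) u v = M u v.
Proof. by move=> Eu Ev; rewrite mulE_E E_mulE Eu Ev !eqxx mul1r mulr1. Qed.

Lemma EME_E a b (M : 'M[F]_n) u v : (E a *m M *m E b) u v = (rel x u == a)%:R * M u v * (rel x v == b)%:R.
Proof. by rewrite mulE_E E_mulE. Qed.

Lemma memI0 (I : 'A[F]_n) : (forall M, (M \in I)%MS -> M = 0) -> I = 0.
Proof.
move=> H; apply/eqP; rewrite -submx0; apply/memmx_subP => M hM.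
by rewrite (H M hM) linear0 sub0mx.
Qed.

Lemma ssT : (forall c, (#|Y c|)%:R != 0 :> F) -> semisimple_alg T.
Proof.
move=> Hinv I sIT /andP[hl hr] Hn; apply: memI0 => M hM.
have MT : (M \in T)%MS := submx_trans hM sIT.
apply/matrixP => y z; rewrite mxE.
set a := rel x y; set b := rel x z.
pose X := E a *m M *m E b.
have XI : (X \in I)%MS.
  apply: submx_trans hr; apply: mem_mulsmx (TE b).
  by apply: submx_trans hl; apply: mem_mulsmx hM; apply: TE.
have XT : (X \in T)%MS := submx_trans XI sIT.
have X0 : X = 0.
  apply: (core (a := a) (b := b)) => //.
  - exact: Tsg.
  - by move=> u v; apply: EME_sup.
  - move=> v l; apply: (nil_eig Hn).
    by apply: submx_trans hr; apply: mem_mulsmx XI (TJab b a).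
  - move=> v l; apply: (nil_eig Hn).
    by apply: submx_trans hr; apply: mem_mulsmx XI (Ttr XT).
by rewrite -(EME_diag M (a := a) (b := b)) // -/X X0 mxE.
Qed.

Lemma ssC a : (forall c, (#|Y c|)%:R != 0 :> F) -> semisimple_alg (corner (E a) T).
Proof.
move=> Hinv I sIC /andP[hl hr] Hn; apply: memI0 => M hM.
have := submx_trans hM sIC; case/mem_corner => N NT EM.
have MT : (M \in T)%MS by rewrite EM; apply: TM; [apply: TM; [apply: TE | exact: NT] | apply: TE].
apply: (core (a := a) (b := a)) => //.
- exact: Tsg.
- by move=> u v; rewrite EM; apply: EME_sup.
- move=> v l; apply: (nil_eig Hn).
  apply: submx_trans hr; apply: mem_mulsmx hM _.
  by apply/mem_corner; exists Jm; [apply: TJ | apply: JabE].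
- move=> v l; apply: (nil_eig Hn).
  apply: submx_trans hr; apply: mem_mulsmx hM _.
  apply/mem_corner; exists N^T; first exact: Ttr.
  by rewrite EM !trmx_mul Etr mulmxA.
Qed.


Lemma K1 a y (N : 'M[F]_n) : rel x y = a -> (N \in T)%MS ->
  E a *m N *m E a *m Jab a a = (\sum_t (rel x t == a)%:R * N y t) *: Jab a a.
Proof.
move=> Ey NT; pose rho u := \sum_t (rel x t == a)%:R * N u t.
have rsg u : rho (sg u) = rho u.
  rewrite /rho (reindex_inj sg_inj) /=; apply: eq_bigr => t _; by rewrite sg_rel (Tsg NT).
apply/matrixP => u w; rewrite !mxE.
have -> : \sum_j (E a *m N *m E a) u j * Jab a a j w =
  (rel x u == a)%:R * (rel x w == a)%:R * rho u.
  rewrite /rho mulr_sumr; apply: eq_bigr => t _; rewrite EME_E mxE.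
  by case: (rel x u == a); case: (rel x t == a); case: (rel x w == a); rewrite /= ?mul1r ?mulr1 ?mul0r ?mulr0.
have [Eu|nu] := eqVneq (rel x u) a; last by rewrite !mul0r mulr0.
case: (@two y u); rewrite ?Eu ?Ey // => ->; rewrite ?rsg; case: (rel x w == a);
  by rewrite /= ?mul1r ?mulr1 ?mulr0 ?mul0r.
Qed.


Lemma K2 a : Jab a a *m Jab a a = (#|Y a|)%:R *: Jab a a.
Proof.
apply/matrixP => u w; rewrite !mxE -sum_ind mulr_suml; apply: eq_bigr => t _; rewrite !mxE.
by case: (rel x u == a); case: (rel x t == a); case: (rel x w == a); rewrite /= ?mul1r ?mulr1 ?mul0r ?mulr0.
Qed.

Lemma K3l a : E a *m Jab a a = Jab a a.
Proof.
by apply/matrixP => u w; rewrite E_mulE !mxE; case: (rel x u == a); rewrite /= ?mul1r ?mul0r.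
Qed.

Lemma K3r a : Jab a a *m E a = Jab a a.
Proof.
by apply/matrixP => u w; rewrite mulE_E !mxE; case: (rel x w == a); rewrite /= ?mulr1 ?mulr0 ?andbF.
Qed.

Lemma Jtr a : (Jab a a)^T = Jab a a.
Proof. by apply/matrixP => u w; rewrite !mxE andbC. Qed.

Lemma K1r a y (N : 'M[F]_n) : rel x y = a -> (N \in T)%MS ->
  exists r, Jab a a *m (E a *m N *m E a) = r *: Jab a a.
Proof.
move=> Ey NT; have := K1 Ey (Ttr NT) => /(congr1 trmx).
rewrite !trmx_mul Etr trmxK Jtr linearZ /= Jtr !mulmxA => ->.
by eexists.
Qed.

Lemma JNJ a y (N : 'M[F]_n) : rel x y = a -> (N \in T)%MS -> (2%:R : F) = 0 -> #|Y a| = 2%N ->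
  Jab a a *m N *m Jab a a = 0.
Proof.
move=> Ey NT h2 hc.
have e : Jab a a *m N *m Jab a a = Jab a a *m (E a *m N *m E a *m Jab a a).
  by rewrite !mulmxA K3r -(mulmxA _ (E a) (Jab a a)) K3l.
by rewrite e (K1 Ey NT) -scalemxAr K2 hc h2 scale0r scaler0.
Qed.

Lemma memj (J A : 'M[F]_n) : (A \in <<mxvec J>>)%MS -> exists c, A = c *: J.
Proof.
rewrite genmxE => /submxP [D hD]; exists (D 0 0).
apply: (can_inj mxvecK); rewrite hD linearZ /= {1}(mx11_scalar D) mul_scalar_mx //.
Qed.

Lemma inj (J : 'M[F]_n) c : (c *: J \in <<mxvec J>>)%MS.
Proof. by rewrite linearZ /= genmxE scalemx_sub. Qed.

Lemma Jne a y : rel x y = a -> Jab a a != 0.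
Proof.
move=> Ey; apply/negP => /eqP /matrixP /(_ y y); rewrite !mxE Ey eqxx /= => /eqP.
by rewrite oner_eq0.
Qed.

Lemma notssC a y : rel x y = a -> (2%:R : F) = 0 -> #|Y a| = 2%N ->
  ~ semisimple_alg (corner (E a) T).
Proof.
move=> Ey h2 hc Hss.
pose J := Jab a a; pose j := <<mxvec J>>%MS.
have JJ : J *m J = 0 by rewrite /J K2 hc h2 scale0r.
have jC : (j <= corner (E a) T)%MS.
  by rewrite genmxE; apply/mem_corner; exists Jm; [apply: TJ | apply: JabE].
have Jj : (J \in j)%MS by rewrite genmxE.
suff j0 : j = 0 by move: Jj; rewrite j0 => /memmx0 /eqP; apply/negP; apply: Jne Ey.
apply: Hss => //.
  apply/andP; split.
    apply/mulsmx_subP => A B hA hB; case/mem_corner: hA => N NT ->.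
    case: (memj hB) => c ->; rewrite -scalemxAr /J (K1 Ey NT) scalerA; exact: inj.
  apply/mulsmx_subP => B A hB hA; case/mem_corner: hA => N NT ->.
  case: (memj hB) => c ->; rewrite -scalemxAl /J.
  case: (K1r Ey NT) => r ->; rewrite scalerA; exact: inj.
exists 1%N => /=; apply/eqP; rewrite -submx0; apply/mulsmx_subP => A B hA hB.
case: (memj hA) => c1 ->; case: (memj hB) => c2 ->.
by rewrite -scalemxAl -scalemxAr JJ !scaler0 linear0 sub0mx.
Qed.

Lemma notssT a y : rel x y = a -> (2%:R : F) = 0 -> #|Y a| = 2%N ->
  ~ semisimple_alg T.
Proof.
move=> Ey h2 hc Hss.
case: HT => _ _ HTT _.
pose J := Jab a a; pose j := <<mxvec J>>%MS.
pose K : 'M[F]_(n * n) := kermx (lin_mx (@mulmx F n n n J)).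
have memK (B : 'M[F]_n) : (B \in K)%MS = (J *m B == 0).
  by rewrite sub_kermx mul_vec_lin mxvec_eq0.
have Jj : (J \in j)%MS by rewrite genmxE.
have TjK : (T * j <= K)%MS.
  apply/mulsmx_subP => N C hN hC; case: (memj hC) => c ->.
  by rewrite memK -scalemxAr -scalemxAr mulmxA (JNJ Ey hN h2 hc) scaler0.
have TjT : (T * j <= T)%MS.
  apply/mulsmx_subP => N C hN hC; case: (memj hC) => c ->; apply: TM hN _.
  by rewrite linearZ /= scalemx_sub // TJab.
pose I := ((T * j) * T)%MS.
have IT : (I <= T)%MS.
  apply/mulsmx_subP => A B hA hB; apply: TM hB; exact: submx_trans hA TjT.
have TTj : (T * (T * j) <= T * j)%MS.
  by rewrite mulsmxA; apply: mulsmxS HTT (submx_refl j).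
suff I0 : I = 0.
  have : (1%:M *m J *m 1%:M \in I)%MS by apply: mem_mulsmx T1; apply: mem_mulsmx T1 Jj.
  rewrite mul1mx mulmx1 I0 => /memmx0 /eqP; apply/negP; apply: Jne Ey.
apply: Hss => //.
  apply/andP; split.
    rewrite /left_mx_ideal /I (mulsmxA T (T * j)%MS T); apply: mulsmxS TTj (submx_refl T).
  by rewrite /right_mx_ideal /I -(mulsmxA (T * j)%MS T T); apply: mulsmxS (submx_refl _) HTT.
exists 1%N => /=; apply/eqP; rewrite -submx0 /I.
rewrite (mulsmxA (T * j * T)%MS (T * j)%MS T).
rewrite -(mulsmxA (T * j)%MS T (T * j)%MS) -(mulsmxA T j (T * (T * j))%MS).
have h0 : (j * (T * (T * j)) <= (0 : 'A[F]_n))%MS.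
  apply/mulsmx_subP => A B hA hB; case: (memj hA) => c ->.
  have : (B \in K)%MS by apply: submx_trans TjK; exact: submx_trans hB TTj.
  by rewrite memK -scalemxAl => /eqP ->; rewrite scaler0 linear0 sub0mx.
have h1 : (T * (j * (T * (T * j))) <= (0 : 'A[F]_n))%MS.
  by apply: submx_trans (mulsmxS (submx_refl T) h0) _; rewrite mulsmx0.
by apply: submx_trans (mulsmxS h1 (submx_refl T)) _; rewrite muls0mx.
Qed.

End Mat.

Theorem corollary5p9 (F : fieldType) (p : nat) (n d : nat)
    (rel : 'I_n -> 'I_n -> 'I_d.+1) (x : 'I_n) (T : 'A[F]_n) :
  has_char F p ->
  is_scheme rel -> quasi_thin rel ->
  generated_subalg (T_gens F rel x) T ->
  (p'_valenced rel p <-> semisimple_alg T) /\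
  (semisimple_alg T <->
     forall a : 'I_d.+1, semisimple_alg (corner (dual_idem F rel x a) T)).
Proof.
move=> Hc Hs Hq HT.
have Hval a y : valency rel a y = #|Y rel x a| := L_val x Hs a y.
have Hpos a := L_Ypos x Hs a.
have Hle a := L_Yle2 x Hs Hq a.
have PI : p'_valenced rel p -> forall c, (#|Y rel x c|)%:R != 0 :> F.
  move=> P c; move: (P c x); rewrite Hval.
  case: p Hc {P} => [|p'] Hc.
    have H0 : [pchar F] =i pred0 by move=> q; rewrite Hc.
    by rewrite ((pcharf0P F).1 H0) -lt0n Hpos.
  by rewrite (dvdn_pcharf Hc).
have NP : ~ p'_valenced rel p ->
    (2%:R : F) = 0 /\ exists a y, rel x y = a /\ #|Y rel x a| = 2%N.
  move=> nP.
  have [a [y hy]] : exists a y, (p %| valency rel a y)%N.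
    apply: NNPP => H; apply: nP => a y; apply/negP => hd; apply: H; by exists a, y.
  rewrite Hval in hy.
  have [y0 y0Y] : exists y0, y0 \in Y rel x a by apply/card_gt0P; apply: Hpos.
  clear PI; case: p Hc nP hy => [|p'] Hc nP hy.
    by move: hy; rewrite dvd0n => /eqP h; move: (Hpos a); rewrite h.
  have pr := pcharf_prime Hc.
  have le := dvdn_leq (Hpos a) hy.
  have gt1 := prime_gt1 pr.
  have e2 : p'.+1 = 2 by move: (Hle a); lia.
  split; first by have := pcharf0 Hc; rewrite e2.
  exists a, y0; split; first by move: y0Y; rewrite inE => /eqP.
  by move: (Hle a); lia.
have toP : ~ ~ p'_valenced rel p -> p'_valenced rel p by apply: NNPP.
split.
  split => [P | Hss]; first exact: (ssT Hs Hq HT (PI P)).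
  apply: toP => nP; case: (NP nP) => h2 [a [y [Ey hc]]].
  exact: (notssT Hs Hq HT Ey h2 hc Hss).
split => [Hss a | Hall].
  have P : p'_valenced rel p.
    apply: toP => nP; case: (NP nP) => h2 [b [y [Ey hc]]].
    exact: (notssT Hs Hq HT Ey h2 hc Hss).
  exact: (ssC Hs Hq HT (PI P)).
have P : p'_valenced rel p.
  apply: toP => nP; case: (NP nP) => h2 [b [y [Ey hc]]].
  exact: (notssC Hs Hq HT Ey h2 hc (Hall b)).
exact: (ssT Hs Hq HT (PI P)).
Qed.
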